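(* There is an absolute constant $K>0$ such that the following holds. Let $n,k,m$ be integers and $\delta$ a real number with $1\le m\le k\le n$ and $0<\delta<1$. Let \[ p=\min\Bigl\{\frac{1}{m}\cdot\log_2\frac{m}{\delta}\cdot\ln\frac{Kn}{m},\ \frac12\Bigr\}, \] and let $M$ be a random $m\times n$ matrix over $GF(2)$ whose entries are independent and each equals $1$ with probability $p$. Then for every random variable $X$ on $\{0,1\}^n$ of min-entropy at least $k$, independent of $M$, the statistical distance between $(M, MX)$ and $(M,U_m)$ is at most \[ \tfrac12\sqrt{\delta+K\cdot 2^{-k+m}}, \] where $U_m$ is uniform on $\{0,1\}^m$ and independent of $M$. (That is, $H(x)=Mx$ is a strong extractor family for min-entropy $k$ with this error.)
   Context: The min-entropy of a random variable $X$ is $\min_x \log_2(1/\Pr[X=x])$. The statistical distance between random variables $A,B$ on a finite set $\Omega$ is $\max_{T\subseteq\Omega}|\Pr[A\in T]-\Pr[B\in T]| = \frac12\sum_{\omega}|\Pr[A=\omega]-\Pr[B=\omega]|$. A strong extractor family for min-entropy $k$ with error $\varepsilon$ is a distribution $H$ on functions $\{0,1\}^n\to\{0,1\}^m$ such that for every $X$ of min-entropy at least $k$ (independent of $H$), $(H,H(X))$ and $(H,U_m)$ are within statistical distance $\varepsilon$. *)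

(* Defs.v *)
From Stdlib Require Import Reals.
From HB Require Import structures.
From mathcomp Require Import all_boot all_order all_algebra.
Set Implicit Arguments. Unset Strict Implicit. Unset Printing Implicit Defensive.
Local Open Scope R_scope.

Definition is_distr (T : finType) (P : T -> R) : Prop :=
  (forall x, (0 <= P x)) /\ \big[Rplus/0]_(x : T) P x = 1.

Definition log2 (x : R) : R := (ln x / ln 2).

(* min_x log2 (1/Pr[X=x]) >= k  (points of probability 0 contribute +infinity) *)
Definition min_entropy_ge (T : finType) (P : T -> R) (k : R) : Prop :=
  forall x, (0 < P x) -> (k <= log2 (/ P x)).

Definition stat_dist (T : finType) (P Q : T -> R) : R :=
  (/2 * \big[Rplus/0]_(w : T) Rabs (P w - Q w)).

Definition bern_mx_law (m n : nat) (p : R) (A : 'M['F_2]_(m, n)) : R :=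
  \big[Rmult/1]_(ij : 'I_m * 'I_n)
    (if A ij.1 ij.2 == GRing.one _ then p else 1 - p).
Arguments bern_mx_law : clear implicits.

Definition law_M_MX (m n : nat) (PM : 'M['F_2]_(m, n) -> R)
  (PX : 'cV['F_2]_n -> R) (w : 'M['F_2]_(m, n) * 'cV['F_2]_m) : R :=
  (PM w.1 * \big[Rplus/0]_(x : 'cV['F_2]_n | mulmx w.1 x == w.2) PX x).

Definition law_M_U (m n : nat) (PM : 'M['F_2]_(m, n) -> R)
  (w : 'M['F_2]_(m, n) * 'cV['F_2]_m) : R :=
  (PM w.1 * / pow 2 m).
Arguments law_M_U : clear implicits.

Definition bias (K : R) (n m : nat) (delta : R) : R :=
  Rmin (/ INR m * log2 (INR m / delta) * ln (K * INR n / INR m)) (/2).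

(* Main.v *)
Require Import Defs.
From Stdlib Require Import Reals Lra Lia Psatz ZArith.
From HB Require Import structures.
From mathcomp Require Import all_boot all_order all_algebra.
Set Implicit Arguments. Unset Strict Implicit. Unset Printing Implicit Defensive.
Local Open Scope R_scope.

HB.instance Definition _ := Monoid.isComLaw.Build R 0 Rplus (fun a b c => esym (Rplus_assoc a b c)) Rplus_comm Rplus_0_l.
HB.instance Definition _ := Monoid.isComLaw.Build R 1 Rmult (fun a b c => esym (Rmult_assoc a b c)) Rmult_comm Rmult_1_l.
HB.instance Definition _ := Monoid.isMulLaw.Build R 0 Rmult Rmult_0_l Rmult_0_r.
HB.instance Definition _ := Monoid.isAddLaw.Build R Rmult Rplus Rmult_plus_distr_r Rmult_plus_distr_l.

Lemma sumR_le (I : finType) (P : pred I) (F G : I -> R) :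
  (forall i, P i -> F i <= G i) ->
  \big[Rplus/0]_(i | P i) F i <= \big[Rplus/0]_(i | P i) G i.
Proof. move=> H; apply: (big_ind2 (fun a b => a <= b)) => //; [lra|move=> *; lra]. Qed.

Lemma sumR_ge0 (I : finType) (P : pred I) (F : I -> R) :
  (forall i, P i -> 0 <= F i) -> 0 <= \big[Rplus/0]_(i | P i) F i.
Proof. move=> H; apply: (big_ind (fun a => 0 <= a)) => //; [lra|move=> *; lra]. Qed.

Lemma prodR_ge0 (I : finType) (P : pred I) (F : I -> R) :
  (forall i, P i -> 0 <= F i) -> 0 <= \big[Rmult/1]_(i | P i) F i.
Proof. move=> H; apply: (big_ind (fun a => 0 <= a)) => //; [lra|move=> *; nra]. Qed.

Lemma iter_plus n c : iter n (Rplus c) 0 = INR n * c.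
Proof. elim: n => [|n IH]; first by rewrite /=; lra. rewrite iterS IH S_INR; lra. Qed.
Lemma iter_mult n c : iter n (Rmult c) 1 = c ^ n.
Proof. elim: n => [|n IH] //=; by rewrite IH. Qed.

Lemma sumR_const (I : finType) (c : R) :
  \big[Rplus/0]_(i : I) c = INR #|I| * c.
Proof. by rewrite big_const iter_plus. Qed.
Lemma prodR_const (I : finType) (c : R) :
  \big[Rmult/1]_(i : I) c = c ^ #|I|.
Proof. by rewrite big_const iter_mult. Qed.

Lemma sumR_opp (I : finType) (P : pred I) (F : I -> R) :
  \big[Rplus/0]_(i | P i) (- F i) = - \big[Rplus/0]_(i | P i) F i.
Proof. symmetry; apply: (big_morph Ropp); [move=> *; lra | lra]. Qed.

Lemma sumR_split (I : finType) (P : pred I) (F G : I -> R) :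
  \big[Rplus/0]_(i | P i) (F i + G i) = \big[Rplus/0]_(i | P i) F i + \big[Rplus/0]_(i | P i) G i.
Proof. by rewrite big_split. Qed.

Lemma sumR_minus (I : finType) (P : pred I) (F G : I -> R) :
  \big[Rplus/0]_(i | P i) (F i - G i) = \big[Rplus/0]_(i | P i) F i - \big[Rplus/0]_(i | P i) G i.
Proof. by rewrite sumR_split sumR_opp. Qed.

Lemma sumR_mull (I : finType) (P : pred I) (F : I -> R) a :
  \big[Rplus/0]_(i | P i) (a * F i) = a * \big[Rplus/0]_(i | P i) F i.
Proof. by rewrite big_distrr. Qed.
Lemma sumR_mulr (I : finType) (P : pred I) (F : I -> R) a :
  \big[Rplus/0]_(i | P i) (F i * a) = (\big[Rplus/0]_(i | P i) F i) * a.
Proof. by rewrite big_distrl. Qed.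

Lemma sum_mul_sum (I J : finType) (F : I -> R) (G : J -> R) :
  \big[Rplus/0]_i \big[Rplus/0]_j (F i * G j) =
  (\big[Rplus/0]_i F i) * (\big[Rplus/0]_j G j).
Proof.
rewrite -sumR_mulr; apply: eq_bigr => i _; by rewrite sumR_mull.
Qed.

Lemma cauchy_w (I : finType) (w a : I -> R) :
  (forall i, 0 <= w i) ->
  (\big[Rplus/0]_i (w i * a i)) ^ 2 <=
  (\big[Rplus/0]_i w i) * (\big[Rplus/0]_i (w i * a i ^ 2)).
Proof.
move=> Hw.
have H0 : 0 <= \big[Rplus/0]_i \big[Rplus/0]_j (w i * w j * (a i - a j) ^ 2).
  apply: sumR_ge0 => i _; apply: sumR_ge0 => j _.
  apply: Rmult_le_pos; [apply: Rmult_le_pos; auto | apply: pow2_ge_0].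
have E : \big[Rplus/0]_i \big[Rplus/0]_j (w i * w j * (a i - a j) ^ 2)
  = 2 * ((\big[Rplus/0]_i w i) * (\big[Rplus/0]_i (w i * a i ^ 2))
        - (\big[Rplus/0]_i (w i * a i)) ^ 2).
  have E1 : forall i j, w i * w j * (a i - a j) ^ 2 =
     (w i * a i ^ 2) * w j + w i * (w j * a j ^ 2) - 2 * ((w i * a i) * (w j * a j)).
    move=> i j; ring.
  under eq_bigr => i _ do under eq_bigr => j _ do rewrite E1.
  under eq_bigr => i _ do rewrite sumR_minus sumR_split.
  rewrite sumR_minus sumR_split !sum_mul_sum.
  under [X in _ - X = _]eq_bigr => i _ do rewrite sumR_mull.
  rewrite sumR_mull sum_mul_sum. ring.
lra.
Qed.

Definition cntT (I : finType) (f : {ffun I -> bool}) := #|[pred i | f i]|.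

Lemma prodR_if (I : finType) (c : pred I) (y : R) :
  \big[Rmult/1]_(i : I) (if c i then y else 1) = y ^ #|[pred i | c i]|.
Proof. by rewrite -big_mkcond big_const iter_mult. Qed.

Lemma pow_card_sum (I : finType) (y : R) :
  \big[Rplus/0]_(f : {ffun I -> bool}) y ^ cntT f = (1 + y) ^ #|I|.
Proof.
rewrite -prodR_const.
have -> : 1 + y = \big[Rplus/0]_(b : bool) (if b then y else 1).
  rewrite big_bool /=; lra.
rewrite bigA_distr_bigA; apply: eq_bigr => f _.
by rewrite prodR_if.
Qed.

Lemma F2_cases (a : 'F_2) : a = 0%R \/ a = 1%R.
Proof. case: a => [[|[|k]] Hk]; [left|right|by []]; exact: val_inj. Qed.

Definition wt n (v : 'cV['F_2]_n) := #|[pred j : 'I_n | v j ord0 != 0%R]|.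

Lemma wt_sum n (y : R) :
  \big[Rplus/0]_(v : 'cV['F_2]_n) y ^ wt v = (1 + y) ^ n.
Proof.
rewrite -[in RHS](card_ord n) -pow_card_sum.
pose h := fun f : {ffun 'I_n -> bool} => ((\col_(j < n) (if f j then 1 else 0))%R : 'cV['F_2]_n).
pose g := fun v : 'cV['F_2]_n => [ffun j => v j ord0 != 0%R].
have hb : bijective h.
  exists g.
  - move=> f; apply/ffunP => j; rewrite ffunE mxE; by case: (f j).
  - move=> v; apply/matrixP => i j; rewrite mxE ffunE (ord1 j).
    by case: (F2_cases (v i ord0)) => ->.
rewrite (reindex h); last by apply: onW_bij.
apply: eq_bigr => f _; congr (_ ^ _).
apply: eq_card => j; rewrite !inE mxE; by case: (f j).
Qed.

Definition indR (b : bool) : R := if b then 1 else 0.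
Definition bb (p : R) (a : 'F_2) : R := if a == 1%R then p else 1 - p.
Definition chi (a : 'F_2) : R := if a == 0%R then 1 else -1.

Lemma chiD a b : chi (a + b)%R = chi a * chi b.
Proof. by case: (F2_cases a) => ->; case: (F2_cases b) => ->; rewrite /chi /=; lra. Qed.

Lemma chi_sum (I : finType) (F : I -> 'F_2) :
  chi (\sum_(i : I) F i)%R = \big[Rmult/1]_(i : I) chi (F i).
Proof. apply: (big_morph chi chiD); by rewrite /chi eqxx. Qed.

Lemma ind_chi (s : 'F_2) : indR (s == 0%R) = (1 + chi s) / 2.
Proof. by case: (F2_cases s) => ->; rewrite /indR /chi /=; field. Qed.

Lemma sum_bb p : \big[Rplus/0]_(a : 'F_2) bb p a = 1.
Proof. rewrite big_ord_recl big_ord1 /bb /=; lra. Qed.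

Lemma sum_bb_chi p (x : 'F_2) :
  \big[Rplus/0]_(a : 'F_2) (bb p a * chi (a * x)%R) = if x == 0%R then 1 else 1 - 2 * p.
Proof.
case: (F2_cases x) => ->; rewrite big_ord_recl big_ord1 /bb /chi /=; lra.
Qed.

Lemma prodR_split (I : finType) (P : pred I) (F G : I -> R) :
  \big[Rmult/1]_(i | P i) (F i * G i) = \big[Rmult/1]_(i | P i) F i * \big[Rmult/1]_(i | P i) G i.
Proof. by rewrite big_split. Qed.

Lemma row_prob n (p : R) (v : 'cV['F_2]_n) :
  \big[Rplus/0]_(r : {ffun 'I_n -> 'F_2})
     (\big[Rmult/1]_j bb p (r j) * indR ((\sum_j r j * v j ord0)%R == 0%R))
  = (1 + (1 - 2 * p) ^ wt v) / 2.
Proof.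
under eq_bigr => r _ do rewrite ind_chi chi_sum.
have E : forall r : {ffun 'I_n -> 'F_2},
   \big[Rmult/1]_j bb p (r j) * ((1 + \big[Rmult/1]_j chi (r j * v j ord0)%R) / 2)
   = / 2 * (\big[Rmult/1]_j bb p (r j) + \big[Rmult/1]_j (bb p (r j) * chi (r j * v j ord0)%R)).
  move=> r; rewrite prodR_split; field.
under eq_bigr => r _ do rewrite E.
rewrite sumR_mull sumR_split.
rewrite -(bigA_distr_bigA (fun j a => bb p a)).
rewrite -(bigA_distr_bigA (fun j a => bb p a * chi (a * v j ord0)%R)).
under eq_bigr => j _ do rewrite sum_bb.
under [X in _ * (_ + X)]eq_bigr => j _ do rewrite sum_bb_chi.
rewrite prodR_const pow1.
have -> : \big[Rmult/1]_j (if v j ord0 == 0%R then 1 else 1 - 2 * p) = (1 - 2 * p) ^ wt v.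
  rewrite -prodR_if; apply: eq_bigr => j _; by case: (v j ord0 == 0%R).
field.
Qed.

Lemma prod_ind (I : finType) (c : pred I) :
  \big[Rmult/1]_(i : I) indR (c i) = indR [forall i, c i].
Proof.
case: (boolP [forall i, c i]) => H.
  by rewrite big1 // => i _; rewrite (forallP H i).
move/forallPn: H => [i Hi]; by rewrite (bigD1 i) //= /indR (negbTE Hi) Rmult_0_l.
Qed.

Lemma mulmx0_forall m n (M : 'M['F_2]_(m, n)) (v : 'cV['F_2]_n) :
  (M *m v == 0)%R = [forall i, (\sum_j M i j * v j ord0 == 0)%R].
Proof.
apply/eqP/forallP => [H i|H].
  by have := congr1 (fun A : 'cV_m => A i ord0) H; rewrite !mxE => ->.
apply/matrixP => i j; rewrite (ord1 j) !mxE; exact/eqP/H.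
Qed.

Lemma bern_prod m n p (M : 'M['F_2]_(m, n)) :
  bern_mx_law m n p M = \big[Rmult/1]_i \big[Rmult/1]_j bb p (M i j).
Proof. by rewrite /bern_mx_law (pair_bigA _ (fun i j => bb p (M i j))). Qed.

Lemma prob_ker m n p (v : 'cV['F_2]_n) :
  \big[Rplus/0]_(M : 'M['F_2]_(m, n)) (bern_mx_law m n p M * indR (M *m v == 0)%R)
  = ((1 + (1 - 2 * p) ^ wt v) / 2) ^ m.
Proof.
under eq_bigr => M _ do rewrite bern_prod mulmx0_forall -prod_ind -prodR_split.
pose h := fun f : {ffun 'I_m -> {ffun 'I_n -> 'F_2}} => (\matrix_(i, j) f i j : 'M['F_2]_(m, n))%R.
pose g := fun M : 'M['F_2]_(m, n) => [ffun i => [ffun j => M i j]].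
have hb : bijective h.
  exists g.
  - move=> f; apply/ffunP => i; apply/ffunP => j; by rewrite !ffunE mxE.
  - move=> M; apply/matrixP => i j; by rewrite mxE !ffunE.
rewrite (reindex h); last by apply: onW_bij.
pose H := fun r : {ffun 'I_n -> 'F_2} =>
    \big[Rmult/1]_j bb p (r j) * indR ((\sum_j r j * v j ord0)%R == 0%R).
transitivity (\big[Rplus/0]_(f : {ffun 'I_m -> {ffun 'I_n -> 'F_2}}) \big[Rmult/1]_i H (f i)).
  apply: eq_bigr => f _; apply: eq_bigr => i _; rewrite /H.
  rewrite /h; under eq_bigr => j _ do rewrite mxE.
  by under [in X in indR X]eq_bigr => j _ do rewrite mxE.
rewrite -(bigA_distr_bigA (fun i r => H r)).
under eq_bigr => i _ do rewrite /H row_prob.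
by rewrite prodR_const card_ord.
Qed.

Lemma sumR_exchange (I J : finType) (F : I -> J -> R) :
  \big[Rplus/0]_i \big[Rplus/0]_j F i j = \big[Rplus/0]_j \big[Rplus/0]_i F i j.
Proof. exact: exchange_big. Qed.

Lemma sum_cond_ind (I : finType) (P : pred I) (F : I -> R) :
  \big[Rplus/0]_(i | P i) F i = \big[Rplus/0]_i (indR (P i) * F i).
Proof.
rewrite big_mkcond; apply: eq_bigr => i _; rewrite /indR; case: (P i) => /=; lra.
Qed.

Lemma sum_ind_eq (I : finType) (a : I) (F : I -> R) :
  \big[Rplus/0]_i (indR (a == i) * F i) = F a.
Proof.
rewrite (bigD1 a) //= big1 /indR ?eqxx; first lra.
move=> i Hi; rewrite eq_sym (negbTE Hi); lra.
Qed.

Lemma card_cV m : #|{: 'cV['F_2]_m}| = (2 ^ m)%N.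
Proof. by rewrite card_mx card_Fp // muln1. Qed.

Lemma INR_pow2 m : INR (2 ^ m)%N = 2 ^ m.
Proof. elim: m => [|m IH] //; rewrite expnS mult_INR IH /=; lra. Qed.

Lemma sum_one_cV m : \big[Rplus/0]_(y : 'cV['F_2]_m) 1 = 2 ^ m.
Proof. by rewrite sumR_const card_cV INR_pow2 Rmult_1_r. Qed.

Lemma le_sqrt a b : 0 <= a -> a ^ 2 <= b -> a <= sqrt b.
Proof. move=> Ha Hb; rewrite -(sqrt_pow2 a Ha); exact: sqrt_le_1_alt. Qed.

Lemma wt0 n : wt (0 : 'cV['F_2]_n)%R = 0%N.
Proof. apply: eq_card0 => j; by rewrite inE mxE eqxx. Qed.

Section SD.
Variables (m n : nat) (p : R) (PX : 'cV['F_2]_n -> R).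
Hypotheses (Hp0 : 0 <= p) (Hp1 : p <= /2) (HX : is_distr PX).

Lemma bb_ge0 a : 0 <= bb p a.
Proof. rewrite /bb; case: (a == 1%R); lra. Qed.

Lemma PM_ge0 M : 0 <= bern_mx_law m n p M.
Proof.
rewrite bern_prod; apply: prodR_ge0 => i _; apply: prodR_ge0 => j _; exact: bb_ge0.
Qed.

Lemma PM_sum : \big[Rplus/0]_M bern_mx_law m n p M = 1.
Proof.
have := @prob_ker m n p 0%R; rewrite wt0 /=.
have -> : (1 + 1) / 2 = 1 by field.
rewrite pow1 => <-; apply: eq_bigr => M _; by rewrite mulmx0 eqxx /indR Rmult_1_r.
Qed.

Definition q (M : 'M['F_2]_(m, n)) (y : 'cV['F_2]_m) :=
  \big[Rplus/0]_(x | (M *m x)%R == y) PX x.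

Lemma q_sum M : \big[Rplus/0]_y q M y = 1.
Proof.
rewrite /q; under eq_bigr => y _ do rewrite sum_cond_ind.
rewrite sumR_exchange; under eq_bigr => x _ do rewrite (sum_ind_eq _ (fun _ => PX x)).
exact: HX.2.
Qed.

Lemma q_sq M : \big[Rplus/0]_y (q M y) ^ 2 =
  \big[Rplus/0]_x \big[Rplus/0]_x' (PX x * PX x' * indR ((M *m (x - x'))%R == 0%R)).
Proof.
rewrite /q; under eq_bigr => y _ do rewrite sum_cond_ind /= Rmult_1_r -sum_mul_sum.
rewrite sumR_exchange; apply: eq_bigr => x _.
rewrite sumR_exchange; apply: eq_bigr => x' _.
have E : forall y, indR ((M *m x)%R == y) * PX x * (indR ((M *m x')%R == y) * PX x')
   = indR ((M *m x)%R == y) * (PX x * PX x' * indR ((M *m x')%R == y)).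
  move=> y; ring.
under eq_bigr => y _ do rewrite E.
rewrite (sum_ind_eq _ (fun y => PX x * PX x' * indR ((M *m x')%R == y))).
by rewrite mulmxBr GRing.subr_eq0 eq_sym.
Qed.


Lemma D_eq M : 2 ^ m * \big[Rplus/0]_y (q M y - / 2 ^ m) ^ 2
   = 2 ^ m * \big[Rplus/0]_y (q M y) ^ 2 - 1.
Proof.
have E : forall y, (q M y - / 2 ^ m) ^ 2 = (q M y) ^ 2 - (2 / 2 ^ m) * q M y + / 2 ^ m * / 2 ^ m * 1.
  move=> y; have Ht : 2 ^ m <> 0 by apply: pow_nonzero; lra. field; exact Ht.
under eq_bigr => y _ do rewrite E.
rewrite sumR_split sumR_minus !sumR_mull q_sum sum_one_cV.
have H2 : 2 ^ m <> 0 by apply: pow_nonzero; lra.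
field; exact H2.
Qed.

Lemma D_ge0 M : 0 <= 2 ^ m * \big[Rplus/0]_y (q M y - / 2 ^ m) ^ 2.
Proof.
apply: Rmult_le_pos; first by apply: pow_le; lra.
apply: sumR_ge0 => y _; exact: pow2_ge_0.
Qed.

Lemma sd_main :
  stat_dist (law_M_MX (bern_mx_law m n p) PX) (law_M_U m n (bern_mx_law m n p))
  <= / 2 * sqrt (\big[Rplus/0]_x \big[Rplus/0]_x'
        (PX x * PX x' * (1 + (1 - 2 * p) ^ wt (x - x')%R) ^ m) - 1).
Proof.
rewrite /stat_dist; apply: Rmult_le_compat_l; first lra.
pose D M := 2 ^ m * \big[Rplus/0]_y (q M y - / 2 ^ m) ^ 2.
have -> : \big[Rplus/0]_(w : 'M['F_2]_(m, n) * 'cV['F_2]_m)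
    Rabs (law_M_MX (bern_mx_law m n p) PX w - law_M_U m n (bern_mx_law m n p) w)
  = \big[Rplus/0]_M \big[Rplus/0]_y
      Rabs (bern_mx_law m n p M * q M y - bern_mx_law m n p M * / 2 ^ m).
  by rewrite pair_bigA.
have S1 : forall M, \big[Rplus/0]_y Rabs (q M y - / 2 ^ m) <= sqrt (D M).
  move=> M; apply: le_sqrt; first by apply: sumR_ge0 => y _; exact: Rabs_pos.
  have H := @cauchy_w _ (fun _ : 'cV['F_2]_m => 1) (fun y => Rabs (q M y - / 2 ^ m)) (fun _ => Rle_0_1).
  rewrite sum_one_cV in H.
  have E1 : \big[Rplus/0]_y (1 * Rabs (q M y - / 2 ^ m)) = \big[Rplus/0]_y Rabs (q M y - / 2 ^ m).
    by apply: eq_bigr => y _; lra.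
  rewrite E1 in H.
  apply: Rle_trans H _; rewrite /D; apply: Req_le; congr (_ * _).
  apply: eq_bigr => y _; by rewrite Rmult_1_l pow2_abs.
apply: Rle_trans (_ : \big[Rplus/0]_M (bern_mx_law m n p M * sqrt (D M)) <= _).
  apply: sumR_le => M _.
  under eq_bigr => y _ do rewrite -Rmult_minus_distr_l Rabs_mult (Rabs_pos_eq _ (PM_ge0 M)).
  rewrite sumR_mull; apply: Rmult_le_compat_l; [exact: PM_ge0 | exact: S1].
apply: Rle_trans (_ : sqrt (\big[Rplus/0]_M (bern_mx_law m n p M * D M)) <= _).
  apply: le_sqrt; first by apply: sumR_ge0 => M _; apply: Rmult_le_pos; [exact: PM_ge0|exact: sqrt_pos].
  have := @cauchy_w _ (bern_mx_law m n p) (fun M => sqrt (D M)) PM_ge0.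
  rewrite PM_sum Rmult_1_l.
  move=> H; apply: Rle_trans H _; apply: Req_le; apply: eq_bigr => M _.
  rewrite -Rsqr_pow2 Rsqr_sqrt //; exact: D_ge0.
apply: sqrt_le_1_alt; apply: Req_le.
rewrite /D; under eq_bigr => M _ do rewrite D_eq q_sq Rmult_minus_distr_l Rmult_1_r.
rewrite sumR_minus PM_sum; congr (_ - 1).
have E : forall M, bern_mx_law m n p M * (2 ^ m * \big[Rplus/0]_x \big[Rplus/0]_x'
     (PX x * PX x' * indR ((M *m (x - x'))%R == 0%R)))
   = \big[Rplus/0]_x \big[Rplus/0]_x' ((2 ^ m * PX x * PX x') *
       (bern_mx_law m n p M * indR ((M *m (x - x'))%R == 0%R))).
  move=> M; rewrite -!sumR_mull; apply: eq_bigr => x _.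
  rewrite -!sumR_mull; apply: eq_bigr => x' _; ring.
under eq_bigr => M _ do rewrite E.
rewrite sumR_exchange; apply: eq_bigr => x _.
rewrite sumR_exchange; apply: eq_bigr => x' _.
rewrite sumR_mull prob_ker.
rewrite /Rdiv Rpow_mult_distr -Rinv_pow; last lra.
have H2 : 2 ^ m <> 0 by apply: pow_nonzero; lra.
field; exact H2.
Qed.

End SD.

Lemma pow_le1 (y : R) k : 0 <= y <= 1 -> y ^ k <= 1.
Proof. move=> Hy; rewrite -(pow1 k); apply: pow_incr; lra. Qed.

Lemma pow_le_dec (y : R) a b : 0 <= y <= 1 -> (a <= b)%N -> y ^ b <= y ^ a.
Proof.
move=> Hy Hab; rewrite -(subnKC Hab) pow_add.
have := pow_le1 (b - a) Hy; have : 0 <= y ^ a by apply: pow_le; lra.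
move=> *; nra.
Qed.

Lemma sum_translate n (x : 'cV['F_2]_n) (G : 'cV['F_2]_n -> R) :
  \big[Rplus/0]_x' G (x - x')%R = \big[Rplus/0]_v G v.
Proof.
have Hi : injective (fun x' : 'cV['F_2]_n => (x - x')%R).
  by move=> a b /= /GRing.addrI /GRing.oppr_inj.
by rewrite [RHS](reindex_inj Hi).
Qed.

Section Bounds.
Variables (m n : nat) (PX : 'cV['F_2]_n -> R) (eps : R).
Hypotheses (HX : is_distr PX) (Heps : forall x, PX x <= eps).

Definition NW W := \big[Rplus/0]_(v : 'cV['F_2]_n) indR (wt v < W)%N.

Lemma FA (x : 'cV['F_2]_n) (y : R) W : 0 <= y <= 1 ->
  \big[Rplus/0]_x' (PX x' * y ^ wt (x - x')%R) <= eps * NW W + y ^ W.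
Proof.
move=> Hy.
apply: Rle_trans (_ : \big[Rplus/0]_(x' : 'cV['F_2]_n) (eps * indR (wt (x - x')%R < W)%N + y ^ W * PX x') <= _).
  apply: sumR_le => x' _.
  have HP0 := (HX.1 x'); have HPe := Heps x'.
  have HyW : 0 <= y ^ W by apply: pow_le; lra.
  rewrite /indR; case: ltnP => H.
  - have := pow_le1 (wt (x - x')%R) Hy; have : 0 <= y ^ wt (x - x')%R by apply: pow_le; lra.
    move=> *; nra.
  - have Hle := pow_le_dec Hy H; rewrite Rmult_0_r Rplus_0_l (Rmult_comm (y ^ W)); exact: Rmult_le_compat_l.
rewrite sumR_split !sumR_mull HX.2 /NW.
rewrite (sum_translate x (fun v => indR (wt v < W)%N)); rewrite Rmult_1_r; exact: Rle_refl.
Qed.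

Lemma FB (x : 'cV['F_2]_n) (y : R) : 0 <= y ->
  \big[Rplus/0]_x' (PX x' * y ^ wt (x - x')%R) <= eps * (1 + y) ^ n.
Proof.
move=> Hy; rewrite -wt_sum -(sum_translate x (fun v => y ^ wt v)) -sumR_mull.
apply: sumR_le => x' _; apply: Rmult_le_compat_r; [exact: pow_le | exact: Heps].
Qed.


Definition CT j0 := \big[Rplus/0]_(T : {ffun 'I_m -> bool}) indR (cntT T < j0)%N.

Lemma S1_le (u : R) (x : 'cV['F_2]_n) W j0 : 0 <= u <= 1 ->
  \big[Rplus/0]_(x' : 'cV['F_2]_n) (PX x' * (1 + u ^ wt (x - x')%R) ^ m)
  <= eps * NW W * CT j0
     + \big[Rplus/0]_(T : {ffun 'I_m -> bool} | (cntT T < j0)%N) (u ^ W) ^ cntT T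
     + eps * \big[Rplus/0]_(T : {ffun 'I_m -> bool} | ~~ (cntT T < j0)%N) (1 + u ^ cntT T) ^ n.
Proof.
move=> Hu.
have E : forall y, (1 + y) ^ m = \big[Rplus/0]_(T : {ffun 'I_m -> bool}) y ^ cntT T.
  by move=> y; rewrite (pow_card_sum 'I_m) card_ord.
under eq_bigr => x' _ do rewrite E -sumR_mull.
rewrite sumR_exchange.
have E2 : forall (T : {ffun 'I_m -> bool}) x',
   PX x' * (u ^ wt (x - x')%R) ^ cntT T = PX x' * (u ^ cntT T) ^ wt (x - x')%R.
  by move=> T x'; rewrite -!pow_mult Nat.mul_comm.
under eq_bigr => T _ do under eq_bigr => x' _ do rewrite E2.
have HuT : forall T : {ffun 'I_m -> bool}, 0 <= u ^ cntT T <= 1.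
  move=> T; split; [apply: pow_le; lra | exact: pow_le1].
rewrite (bigID (fun T : {ffun 'I_m -> bool} => (cntT T < j0)%N)) /=.
have H1 : \big[Rplus/0]_(T : {ffun 'I_m -> bool} | (cntT T < j0)%N)
     \big[Rplus/0]_(x' : 'cV['F_2]_n) (PX x' * (u ^ cntT T) ^ wt (x - x')%R)
  <= eps * NW W * CT j0 + \big[Rplus/0]_(T : {ffun 'I_m -> bool} | (cntT T < j0)%N) (u ^ W) ^ cntT T.
  apply: Rle_trans (_ : \big[Rplus/0]_(T : {ffun 'I_m -> bool} | (cntT T < j0)%N)
      (eps * NW W * 1 + (u ^ W) ^ cntT T) <= _).
    apply: sumR_le => T _; rewrite Rmult_1_r -!pow_mult Nat.mul_comm pow_mult.
    exact: FA.
  rewrite sumR_split.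
  have -> : \big[Rplus/0]_(T : {ffun 'I_m -> bool} | (cntT T < j0)%N) (eps * NW W * 1)
     = eps * NW W * CT j0.
    rewrite sumR_mull sum_cond_ind /CT; congr (_ * _); apply: eq_bigr => T _; lra.
  exact: Rle_refl.
have H2 : \big[Rplus/0]_(T : {ffun 'I_m -> bool} | ~~ (cntT T < j0)%N)
     \big[Rplus/0]_(x' : 'cV['F_2]_n) (PX x' * (u ^ cntT T) ^ wt (x - x')%R)
  <= eps * \big[Rplus/0]_(T : {ffun 'I_m -> bool} | ~~ (cntT T < j0)%N) (1 + u ^ cntT T) ^ n.
  rewrite -sumR_mull; apply: sumR_le => T _; apply: FB; exact: (HuT T).1.
apply: Rle_trans (Rplus_le_compat _ _ _ _ H1 H2) _; rewrite Rplus_assoc; exact: Rle_refl.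
Qed.

End Bounds.

Lemma sumR_drop (I : finType) (P : pred I) (F : I -> R) :
  (forall i, 0 <= F i) -> \big[Rplus/0]_(i | P i) F i <= \big[Rplus/0]_i F i.
Proof.
move=> H; rewrite big_mkcond; apply: sumR_le => i _; case: (P i) => /=; [exact: Rle_refl|exact: H].
Qed.

Lemma NW_theta n W (t : R) : 0 <= t <= 1 -> NW n W * t ^ W <= (1 + t) ^ n.
Proof.
move=> Ht; rewrite -wt_sum /NW -sumR_mulr; apply: sumR_le => v _.
rewrite /indR; case: ltnP => H.
- rewrite Rmult_1_l; apply: pow_le_dec => //; exact: ltnW.
- rewrite Rmult_0_l; apply: pow_le; lra.
Qed.

Lemma NW_1 n : NW n 1 <= 1.
Proof.
rewrite -(pow1 n) -(Rplus_0_r 1) -wt_sum /NW; apply: sumR_le => v _.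
rewrite /indR; case: ltnP => H.
- have -> : wt v = 0%N by move: H; case: (wt v).
  rewrite /=; lra.
- case: (wt v) H => //= k _; lra.
Qed.

Lemma CT_phi m j0 (t : R) : 0 <= t <= 1 -> CT m j0 * t ^ j0 <= (1 + t) ^ m.
Proof.
move=> Ht; rewrite -{2}(card_ord m) -pow_card_sum /CT -sumR_mulr; apply: sumR_le => T _.
rewrite /indR; case: ltnP => H.
- rewrite Rmult_1_l; apply: pow_le_dec => //; exact: ltnW.
- rewrite Rmult_0_l; apply: pow_le; lra.
Qed.

Lemma CT_le m j0 : CT m j0 <= 2 ^ m.
Proof.
have := @CT_phi m j0 1; rewrite pow1 Rmult_1_r; apply; lra.
Qed.

Lemma sum_small m (y : R) j0 : 0 <= y ->
  \big[Rplus/0]_(T : {ffun 'I_m -> bool} | (cntT T < j0)%N) y ^ cntT T <= (1 + y) ^ m.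
Proof.
move=> Hy; have -> : (1 + y) ^ m = \big[Rplus/0]_(T : {ffun 'I_m -> bool}) y ^ cntT T by rewrite (pow_card_sum 'I_m) card_ord.
apply: sumR_drop => T; exact: pow_le.
Qed.

Lemma sum_large m n (u : R) j0 : 0 <= u <= 1 ->
  \big[Rplus/0]_(T : {ffun 'I_m -> bool} | ~~ (cntT T < j0)%N) (1 + u ^ cntT T) ^ n
  <= 2 ^ m * (1 + u ^ j0) ^ n.
Proof.
move=> Hu.
have H0 : 0 <= (1 + u ^ j0) ^ n by apply: pow_le; have := pow_le u j0; lra.
apply: Rle_trans (_ : \big[Rplus/0]_(T : {ffun 'I_m -> bool} | ~~ (cntT T < j0)%N) (1 + u ^ j0) ^ n <= _).
  apply: sumR_le => T; rewrite -leqNgt => H.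
  apply: pow_incr; split; first by have := pow_le u (cntT T); lra.
  have := pow_le_dec Hu H; lra.
apply: Rle_trans (sumR_drop _ (fun _ => H0)) _.
rewrite sumR_const.
have -> : INR #|{: {ffun 'I_m -> bool}}| = 2 ^ m.
  by rewrite card_ffun card_bool card_ord INR_pow2.
exact: Rle_refl.
Qed.

Lemma sum_large0 m n (u : R) j0 : (m < j0)%N ->
  \big[Rplus/0]_(T : {ffun 'I_m -> bool} | ~~ (cntT T < j0)%N) (1 + u ^ cntT T) ^ n = 0.
Proof.
move=> Hm; apply: big1 => T; rewrite -leqNgt => H; exfalso.
have : (cntT T <= m)%N by apply: leq_trans (max_card _) _; rewrite card_ord.
move=> H'; have := leq_trans H H'; by rewrite leqNgt Hm.
Qed.

Lemma exp_le x y : x <= y -> exp x <= exp y.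
Proof. case/Rle_lt_or_eq_dec => [H|->]; [left; exact: exp_increasing|exact: Rle_refl]. Qed.

Lemma ln_le x y : 0 < x -> x <= y -> ln x <= ln y.
Proof. move=> Hx; case/Rle_lt_or_eq_dec => [H|->]; [left; exact: ln_increasing|exact: Rle_refl]. Qed.

Lemma ln_le_inv x y : 0 < x -> 0 < y -> ln x <= ln y -> x <= y.
Proof. move=> Hx Hy; case/Rle_lt_or_eq_dec => [H|H]; [left; exact: ln_lt_inv|right; exact: ln_inv]. Qed.

Lemma exp_pow_n a k : exp a ^ k = exp (INR k * a).
Proof.
elim: k => [|k IH]; first by rewrite /= Rmult_0_l exp_0.
have -> : exp a ^ k.+1 = exp a * exp a ^ k by []. rewrite IH -exp_plus S_INR; congr exp; ring.
Qed.

Lemma ln_le_sub1 x : 0 < x -> ln x <= x - 1.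
Proof. move=> Hx; have := exp_ineq1_le (ln x); rewrite exp_ln //; lra. Qed.

Lemma ln_div x y : 0 < x -> 0 < y -> ln (x / y) = ln x - ln y.
Proof.
move=> Hx Hy; rewrite /Rdiv ln_mult ?ln_Rinv //; apply: Rinv_0_lt_compat; lra.
Qed.

Lemma ln2_lt1 : ln 2 < 1.
Proof.
rewrite -[X in _ < X](ln_exp 1); apply: ln_increasing; first lra.
have := exp_ineq1 1; lra.
Qed.

Lemma ln2_gt : / 2 < ln 2.
Proof. exact: ln_lt_2. Qed.

Lemma pow2_exp k : 2 ^ k = exp (INR k * ln 2).
Proof. by rewrite -exp_pow_n exp_ln //; lra. Qed.

Lemma minent_bound n (PX : 'cV['F_2]_n -> R) k :
  is_distr PX -> min_entropy_ge PX (INR k) -> forall x, PX x <= / 2 ^ k.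
Proof.
move=> HX Hm x; have H0 := HX.1 x.
case: (Rle_lt_or_eq_dec _ _ H0) => Hp; last first.
  rewrite -Hp; apply: Rlt_le; apply: Rinv_0_lt_compat; apply: pow_lt; lra.
have := Hm x Hp; rewrite /log2 => H.
have Hl2 := ln2_gt.
have H1 : INR k * ln 2 <= ln (/ PX x).
  have := Rmult_le_compat_r (ln 2) _ _ (Rlt_le _ _ (Rlt_trans _ _ _ (Rinv_0_lt_compat 2 Rlt_0_2) Hl2)) H.
  rewrite /Rdiv Rmult_assoc Rinv_l; lra.
have H2 : 2 ^ k <= / PX x.
  rewrite pow2_exp -(exp_ln (/ PX x)); [exact: exp_le | exact: Rinv_0_lt_compat].
rewrite -(Rinv_inv (PX x)); apply: Rinv_le_contravar => //; apply: pow_lt; lra.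
Qed.

Definition Bnd m n (u eps : R) W j0 :=
  eps * NW n W * CT m j0
  + \big[Rplus/0]_(T : {ffun 'I_m -> bool} | (cntT T < j0)%N) (u ^ W) ^ cntT T
  + eps * \big[Rplus/0]_(T : {ffun 'I_m -> bool} | ~~ (cntT T < j0)%N) (1 + u ^ cntT T) ^ n.

Lemma comb m n k (p : R) (PX : 'cV['F_2]_n -> R) W j0 :
  0 <= p <= / 2 -> is_distr PX -> min_entropy_ge PX (INR k) ->
  stat_dist (law_M_MX (bern_mx_law m n p) PX) (law_M_U m n (bern_mx_law m n p))
  <= / 2 * sqrt (Bnd m n (1 - 2 * p) (/ 2 ^ k) W j0 - 1).
Proof.
move=> Hp HX Hm.
apply: Rle_trans (sd_main m Hp.1 Hp.2 HX) _.
apply: Rmult_le_compat_l; first lra.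
apply: sqrt_le_1_alt.
have Heps := minent_bound HX Hm.
have Hu : 0 <= 1 - 2 * p <= 1 by lra.
suff : \big[Rplus/0]_x \big[Rplus/0]_x'
     (PX x * PX x' * (1 + (1 - 2 * p) ^ wt (x - x')%R) ^ m)
   <= \big[Rplus/0]_x (PX x * Bnd m n (1 - 2 * p) (/ 2 ^ k) W j0).
  rewrite sumR_mulr HX.2 Rmult_1_l => H; apply: Rplus_le_compat_r; exact: H.
apply: sumR_le => x _.
under eq_bigr => x' _ do rewrite Rmult_assoc.
rewrite sumR_mull; apply: Rmult_le_compat_l; first exact: HX.1.
exact: (S1_le m HX Heps).
Qed.

Lemma ceil_nat (r : R) : 0 <= r -> exists k : nat, r <= INR k <= r + 1.
Proof.
move=> Hr; have [H1 H2] := archimed r.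
have Hz : Z.le 0 (up r) by apply: le_IZR; lra.
exists (Z.to_nat (up r)); rewrite INR_IZR_INZ Z2Nat.id //; lra.
Qed.

Lemma one_plus_pow (y : R) k : 0 <= y -> (1 + y) ^ k <= exp (INR k * y).
Proof.
move=> Hy; rewrite -exp_pow_n; apply: pow_incr; split; first lra.
have := exp_ineq1_le y; lra.
Qed.

Lemma pow_exp_bound (u s : R) k : 0 <= u -> u <= exp (- s) -> u ^ k <= exp (- (INR k * s)).
Proof.
move=> H0 H1; apply: Rle_trans (_ : exp (- s) ^ k <= _).
  by apply: pow_incr; split.
rewrite exp_pow_n; apply: Req_le; congr exp; ring.
Qed.

Lemma exp_neg_ln z : 0 < z -> exp (- ln z) = / z.
Proof. move=> Hz; by rewrite exp_Ropp exp_ln. Qed.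

Lemma exp_half_le d : 0 <= d <= 1 -> exp (d / 2) <= 1 + d.
Proof.
move=> Hd.
have HF := exp_ineq1_le (- (d / 2)).
have HE : exp (d / 2) * exp (- (d / 2)) = 1 by rewrite -exp_plus Rplus_opp_r exp_0.
have HE0 := exp_pos (d / 2).
have H1 : exp (d / 2) * (1 - d / 2) <= 1.
  rewrite -HE; apply: Rmult_le_compat_l; lra.
nra.
Qed.

Lemma small_bound (m W : nat) (u s d : R) :
  (1 <= m)%N -> 0 <= u -> u <= exp (- s) -> 0 < d < 1 ->
  ln (2 * INR m / d) <= INR W * s -> (1 + u ^ W) ^ m <= 1 + d.
Proof.
move=> Hm Hu Hus Hd HW.
have HM : 1 <= INR m by apply: (le_INR 1); apply/leP.
have Hz : 0 < 2 * INR m / d by apply: Rdiv_lt_0_compat; lra.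
have H1 : u ^ W <= d / (2 * INR m).
  apply: Rle_trans (pow_exp_bound W Hu Hus) _.
  apply: Rle_trans (_ : exp (- ln (2 * INR m / d)) <= _).
    apply: exp_le; lra.
  rewrite exp_neg_ln //; apply: Req_le; field; lra.
apply: Rle_trans (one_plus_pow m (pow_le _ W Hu)) _.
apply: Rle_trans (exp_half_le (conj (Rlt_le _ _ (proj1 Hd)) (Rlt_le _ _ (proj2 Hd)))).
apply: exp_le.
have -> : d / 2 = INR m * (d / (2 * INR m)) by field; lra.
apply: Rmult_le_compat_l; lra.
Qed.

Lemma large_bound (n j0 : nat) (u s : R) :
  (1 <= n)%N -> 0 <= u -> u <= exp (- s) ->
  ln (INR n) <= INR j0 * s -> (1 + u ^ j0) ^ n <= 3.
Proof.
move=> Hn Hu Hus Hj.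
have HN : 1 <= INR n by apply: (le_INR 1); apply/leP.
have H1 : u ^ j0 <= / INR n.
  apply: Rle_trans (pow_exp_bound j0 Hu Hus) _.
  rewrite -exp_neg_ln; last lra.
  apply: exp_le; lra.
apply: Rle_trans (one_plus_pow n (pow_le _ j0 Hu)) _.
apply: Rle_trans exp_le_3.
apply: exp_le.
have : INR n * u ^ j0 <= INR n * / INR n by apply: Rmult_le_compat_l; lra.
rewrite Rinv_r; lra.
Qed.

Lemma ind_ge0 b : 0 <= indR b.
Proof. rewrite /indR; case: b; lra. Qed.

Lemma NW_ge0 n W : 0 <= NW n W.
Proof. apply: sumR_ge0 => v _; exact: ind_ge0. Qed.

Lemma CT_ge0 m j0 : 0 <= CT m j0.
Proof. apply: sumR_ge0 => v _; exact: ind_ge0. Qed.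

Lemma pow_as_exp (t : R) k : 0 < t -> t ^ k = exp (INR k * ln t).
Proof. move=> Ht; by rewrite -exp_pow_n exp_ln. Qed.

Lemma nwct_bound m n W j0 (t f : R) : 0 < t <= 1 -> 0 < f <= 1 ->
  INR n * t + INR m * f + INR W * (- ln t) + INR j0 * (- ln f) <= INR m * ln 2 ->
  NW n W * CT m j0 <= 2 ^ m.
Proof.
move=> Ht Hf H.
have H1 : NW n W * t ^ W <= exp (INR n * t).
  apply: Rle_trans (@NW_theta n W t (conj (Rlt_le _ _ (proj1 Ht)) (proj2 Ht))) _.
  apply: one_plus_pow; lra.
have H2 : CT m j0 * f ^ j0 <= exp (INR m * f).
  apply: Rle_trans (@CT_phi m j0 f (conj (Rlt_le _ _ (proj1 Hf)) (proj2 Hf))) _.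
  apply: one_plus_pow; lra.
have Ht0 : 0 < t ^ W by apply: pow_lt; lra.
have Hf0 : 0 < f ^ j0 by apply: pow_lt; lra.
have H3 : NW n W * CT m j0 * (t ^ W * f ^ j0) <= 2 ^ m * (t ^ W * f ^ j0).
  apply: Rle_trans (_ : exp (INR n * t) * exp (INR m * f) <= _).
    have := NW_ge0 n W; have := CT_ge0 m j0.
    move=> *; rewrite (_ : NW n W * CT m j0 * (t ^ W * f ^ j0) =
      (NW n W * t ^ W) * (CT m j0 * f ^ j0)); last ring.
    apply: Rmult_le_compat => //; apply: Rmult_le_pos; lra.
  rewrite -exp_plus pow2_exp (pow_as_exp W (proj1 Ht)) (pow_as_exp j0 (proj1 Hf)) -!exp_plus.
  apply: exp_le; lra.
have Hp : 0 < t ^ W * f ^ j0 by apply: Rmult_lt_0_compat.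
apply: (Rmult_le_reg_r _ _ _ Hp H3).
Qed.



Lemma star (M c x l lam W j0 ti : R) :
  c = 1000000000000 -> / 2 <= x <= 1 -> 24 <= l -> c <= lam -> c <= M ->
  2 * l * lam < M * x ->
  0 <= W -> W <= (x + l) * (M * x) / (2 * l * lam) + 1 ->
  0 <= j0 -> j0 <= (l + lam) * (M * x) / (2 * l * lam) + 1 ->
  0 <= ti -> ti <= lam * (1 + / c) ->
  M / lam + M * (/ 16) + W * ti + j0 * (4 * x) <= M * x.
Proof.
move=> Hc Hx Hl Hlam HM Hk HW0 HW Hj0 Hj Hti0 Hti.
have Hl0 : 0 < l by lra.
have Hlam0 : 0 < lam by lra.
set a := / l. set b := / lam.
have Ha : 0 < a <= / 24.
  split; first by apply: Rinv_0_lt_compat.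
  apply: Rinv_le_contravar; lra.
have Hb : 0 < b <= / c.
  split; first by apply: Rinv_0_lt_compat.
  apply: Rinv_le_contravar; lra.
have Ela : l * a = 1 by rewrite /a Rinv_r; lra.
have Elb : lam * b = 1 by rewrite /b Rinv_r; lra.
have HW' : W <= M * x * (x * a + 1) / 2 * b + 1.
  apply: Rle_trans HW _; apply: Req_le; rewrite /a /b; field; lra.
have Hj' : j0 <= M * x * b / 2 + M * x * a / 2 + 1.
  apply: Rle_trans Hj _; apply: Req_le; rewrite /a /b; field; lra.
have Hlam' : lam <= M * x * a / 2.
  have : lam * (l * a) <= M * x * a / 2 by nra.
  rewrite Ela; lra.
have T1 : W * ti <= (M * x * (x * a + 1) / 2 + lam) * (1 + / c).
  apply: Rle_trans (_ : (M * x * (x * a + 1) / 2 * b + 1) * ti <= _).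
    by apply: Rmult_le_compat_r.
  apply: Rle_trans (_ : (M * x * (x * a + 1) / 2 * b + 1) * (lam * (1 + / c)) <= _).
    apply: Rmult_le_compat_l => //.
    have : 0 <= M * x * (x * a + 1) / 2 * b.
      apply: Rmult_le_pos; last lra.
      apply: Rmult_le_pos; last lra.
      apply: Rmult_le_pos; [|nra]; apply: Rmult_le_pos; lra.
    lra.
  apply: Req_le.
  have -> : (M * x * (x * a + 1) / 2 * b + 1) * (lam * (1 + / c))
     = (M * x * (x * a + 1) / 2 * (lam * b) + lam) * (1 + / c) by ring.
  rewrite Elb; ring.
have T2 : j0 * (4 * x) <= (M * x * b / 2 + M * x * a / 2 + 1) * (4 * x).
  apply: Rmult_le_compat_r => //; lra.
have HMa : 0 <= M * a by apply: Rmult_le_pos; lra.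
have HMb : 0 <= M * b by apply: Rmult_le_pos; lra.
have Hxx : x * x <= 1 by nra.
have P1 : M * x * (x * a) <= M * a.
  have := Rmult_le_compat_l (M * a) _ _ HMa Hxx.
  have -> : M * x * (x * a) = M * a * (x * x) by ring.
  lra.
have P2 : M * x * a <= M * a.
  have := Rmult_le_compat_l (M * a) _ _ HMa (proj2 Hx).
  have -> : M * x * a = M * a * x by ring.
  lra.
have P3 : M * x * b * x <= M * b.
  have := Rmult_le_compat_l (M * b) _ _ HMb Hxx.
  have -> : M * x * b * x = M * b * (x * x) by ring.
  lra.
subst c.
have P5 : M * b <= M * / 1000000000000.
  apply: Rmult_le_compat_l; lra.
have P6 : M * a <= M * / 24.
  apply: Rmult_le_compat_l; lra.
have P8 : M * x >= M * / 2 by nra.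
have P9 : (M * x * (x * a + 1) / 2 + lam) * / 1000000000000 <= M * 2 * / 1000000000000.
  have H1 : M * x * (x * a + 1) / 2 + lam <= M * 2.
    have : M * x <= M by nra.
    lra.
  apply: Rmult_le_compat_r; [left; apply: Rinv_0_lt_compat; lra | lra].
have HMc : 4 * x <= M * / 1000000000000 * 4 by lra.
rewrite /Rdiv -/b.
lra.
Qed.

Definition cK : R := 1000000000000.

Lemma exp24 : exp 24 <= cK.
Proof.
have -> : 24 = INR 24 * 1 by rewrite /=; lra.
rewrite -exp_pow_n.
apply: Rle_trans (_ : 3 ^ 24 <= _).
  apply: pow_incr; split; [left; exact: exp_pos | exact: exp_le_3].
rewrite /cK /=; lra.
Qed.

Lemma ln_cK : 24 <= ln cK.
Proof.
rewrite -(ln_exp 24); apply: ln_le; [exact: exp_pos | exact: exp24].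
Qed.

Lemma case_b (m n : nat) (d eps : R) :
  (2 <= m)%N -> (m <= n)%N -> 0 < d < 1 -> 0 <= eps ->
  / INR m * log2 (INR m / d) * ln (exp cK * INR n / INR m) < / 2 ->
  exists W j0, Bnd m n (1 - 2 * (/ INR m * log2 (INR m / d) * ln (exp cK * INR n / INR m))) eps W j0
     <= 1 + d + exp cK * 2 ^ m * eps.
Proof.
move=> Hm Hmn Hd Heps.
set M := INR m. set N := INR n.
set lam := ln (exp cK * N / M).
set A := / M * log2 (M / d) * lam.
move=> HA.
have HM2 : 2 <= M by rewrite /M; apply: (le_INR 2); apply/leP.
have HMN : M <= N by rewrite /M /N; apply: le_INR; apply/leP.
have HcK : cK = 1000000000000 by [].
have Hx := ln2_gt. have Hx1 := ln2_lt1.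
set x := ln 2 in Hx Hx1.
have HNM : 1 <= N / M.
  apply: (Rmult_le_reg_r M); first lra.
  rewrite /Rdiv Rmult_assoc Rinv_l; lra.
have Elam : lam = cK + ln (N / M).
  rewrite /lam /Rdiv Rmult_assoc ln_mult ?ln_exp //; first exact: exp_pos.
  apply: Rmult_lt_0_compat; [lra | apply: Rinv_0_lt_compat; lra].
have HlnNM : 0 <= ln (N / M).
  rewrite -ln_1; apply: ln_le; lra.
have Hlam : cK <= lam by lra.
set l := ln (M / d).
have Hl : ln M < l.
  apply: ln_increasing; first lra.
  apply: (Rmult_lt_reg_r d); first lra.
  rewrite /Rdiv Rmult_assoc Rinv_l; nra.
have HlnM : x <= ln M by apply: ln_le; lra.
have EA : A = l * lam / (x * M).
  rewrite /A /log2 -/l /x; field; split; apply: Rgt_not_eq; rewrite -/x; lra.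
have Hk : 2 * l * lam < M * x.
  have HxM : 0 < x * M by nra.
  have : l * lam / (x * M) * (x * M) < / 2 * (x * M) by apply: Rmult_lt_compat_r; lra.
  rewrite /Rdiv Rmult_assoc Rinv_l; lra.
have HMc : cK <= M.
  have : 2 * x * cK <= 2 * l * lam.
    apply: Rmult_le_compat; [nra | rewrite HcK; lra | nra | lra].
  move=> H; nra.
have Hl24 : 24 <= l.
  have := ln_cK; have : ln cK <= ln M by apply: ln_le; [rewrite HcK; lra | lra].
  lra.
set s := 2 * A.
have Hs : 0 < s < 1.
  rewrite /s EA; split.
  - apply: Rmult_lt_0_compat; first lra.
    apply: Rdiv_lt_0_compat; [apply: Rmult_lt_0_compat; lra | nra].
  - have := HA; rewrite -/A EA; lra.
set u := 1 - 2 * A.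
have Hu : 0 <= u <= 1 by rewrite /u -/s; lra.
have Hus : u <= exp (- s) by have := exp_ineq1_le (- s); rewrite /u -/s; lra.
have E2M : ln (2 * M / d) = x + l.
  rewrite /l /x /Rdiv Rmult_assoc ln_mult //; first lra.
  apply: Rmult_lt_0_compat; [lra | apply: Rinv_0_lt_compat; lra].
have [W [HW1 HW2]] : exists W : nat, ln (2 * M / d) / s <= INR W <= ln (2 * M / d) / s + 1.
  apply: ceil_nat; rewrite E2M; apply: Rlt_le; apply: Rdiv_lt_0_compat; lra.
have HlnN0 : 0 <= ln N by rewrite -ln_1; apply: ln_le; lra.
have [j0 [Hj1 Hj2]] : exists j0 : nat, ln N / s <= INR j0 <= ln N / s + 1.
  apply: ceil_nat; apply: Rmult_le_pos; first lra.
  left; apply: Rinv_0_lt_compat; lra.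
exists W, j0.
have HWs : ln (2 * M / d) <= INR W * s.
  have : ln (2 * M / d) / s * s <= INR W * s by apply: Rmult_le_compat_r; lra.
  rewrite /Rdiv Rmult_assoc Rinv_l; lra.
have Hjs : ln N <= INR j0 * s.
  have : ln N / s * s <= INR j0 * s by apply: Rmult_le_compat_r; lra.
  rewrite /Rdiv Rmult_assoc Rinv_l; lra.
have Bsmall : \big[Rplus/0]_(T : {ffun 'I_m -> bool} | (cntT T < j0)%N) (u ^ W) ^ cntT T <= 1 + d.
  apply: Rle_trans (sum_small _ _ (pow_le _ W (proj1 Hu))) _.
  exact: (small_bound (ltnW Hm) (proj1 Hu) Hus Hd HWs).
have Hn1 : (1 <= n)%N by apply: leq_trans Hmn; exact: ltnW.
have Blarge : \big[Rplus/0]_(T : {ffun 'I_m -> bool} | ~~ (cntT T < j0)%N) (1 + u ^ cntT T) ^ n <= 2 ^ m * 3.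
  apply: Rle_trans (@sum_large m n u j0 Hu) _.
  apply: Rmult_le_compat_l; first by apply: pow_le; lra.
  exact: (large_bound Hn1 (proj1 Hu) Hus Hjs).
have Hlam1 : 1 <= lam by rewrite HcK in Hlam; lra.
have HNl : 0 < N * lam by nra.
set t := M / (N * lam).
have Ht : 0 < t <= 1.
  rewrite /t; split; first by apply: Rdiv_lt_0_compat; lra.
  apply: (Rmult_le_reg_r (N * lam)) => //.
  have -> : M / (N * lam) * (N * lam) = M by field; split; apply: Rgt_not_eq; lra.
  nra.
have Hf : 0 < / 16 <= 1 by split; [apply: Rinv_0_lt_compat; lra | rewrite -Rinv_1; apply: Rinv_le_contravar; lra].
have Elnf : - ln (/ 16) = INR 4 * x.
  rewrite ln_Rinv; last lra.
  have -> : 16 = 2 ^ 4 by rewrite /=; ring.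
  rewrite ln_pow; [by rewrite Ropp_involutive | lra].
have Elnt : - ln t = ln (N / M) + ln lam.
  rewrite /t /Rdiv ln_mult; [|lra|apply: Rinv_0_lt_compat; lra].
  rewrite ln_Rinv // ln_mult; [|lra|lra].
  rewrite ln_mult; [|lra|apply: Rinv_0_lt_compat; lra].
  rewrite ln_Rinv; [ring|lra].
have Hlnlam : ln lam <= cK + lam / cK.
  have Hc0 : 0 < cK by rewrite HcK; lra.
  have -> : lam = cK * (lam / cK) by field; apply: Rgt_not_eq; lra.
  rewrite ln_mult; [|lra|apply: Rdiv_lt_0_compat; lra].
  have := ln_le_sub1 Hc0.
  have := @ln_le_sub1 (lam / cK) (Rdiv_lt_0_compat _ _ (Rlt_le_trans _ _ _ Hc0 Hlam) Hc0).
  have -> : cK * (lam / cK) / cK = lam / cK by field; apply: Rgt_not_eq; lra.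
  lra.
have Hti0 : 0 <= - ln t.
  rewrite Elnt; have : 0 <= ln lam by rewrite -ln_1; apply: ln_le; lra.
  lra.
have Hti : - ln t <= lam * (1 + / cK).
  rewrite Elnt; have : lam / cK = lam * / cK by [].
  lra.
have Es : s = 2 * l * lam / (x * M) by rewrite /s EA; field; split; apply: Rgt_not_eq; lra.
have HxM : 0 < x * M by nra.
have HlnN : ln N <= l + lam.
  have -> : ln N = ln M + ln (N / M).
    rewrite -ln_mult; [|lra|lra]; congr ln; field; apply: Rgt_not_eq; lra.
  rewrite HcK in Elam; lra.
have HW' : INR W <= (x + l) * (M * x) / (2 * l * lam) + 1.
  apply: Rle_trans HW2 _; rewrite E2M Es; apply: Req_le; field.
  repeat split; apply: Rgt_not_eq; nra.
have Hj' : INR j0 <= (l + lam) * (M * x) / (2 * l * lam) + 1.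
  apply: Rle_trans Hj2 _; rewrite Es.
  have -> : ln N / (2 * l * lam / (x * M)) = ln N * ((M * x) / (2 * l * lam)).
    field; repeat split; apply: Rgt_not_eq; nra.
  have -> : (l + lam) * (M * x) / (2 * l * lam) = (l + lam) * ((M * x) / (2 * l * lam)) by field; repeat split; apply: Rgt_not_eq; nra.
  have : 0 <= (M * x) / (2 * l * lam) by apply: Rlt_le; apply: Rdiv_lt_0_compat; nra.
  move=> H0; have := Rmult_le_compat_r _ _ _ H0 HlnN; lra.
have Hstar := star HcK (conj (Rlt_le _ _ Hx) (Rlt_le _ _ Hx1)) Hl24 Hlam HMc Hk
   (pos_INR W) HW' (pos_INR j0) Hj' Hti0 Hti.
have HNWCT : NW n W * CT m j0 <= 2 ^ m.
  apply: (nwct_bound Ht Hf).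
  have -> : N * t = M / lam by rewrite /t; field; repeat split; apply: Rgt_not_eq; nra.
  rewrite Elnf -/x -/M -/N; rewrite /= in Hstar |- *. lra.
have HK : 4 <= exp cK by have := exp_ineq1_le cK; rewrite HcK; lra.
have H2m : 0 <= 2 ^ m by apply: pow_le; lra.
rewrite /Bnd -/A -/u.
have E1 : eps * NW n W * CT m j0 <= eps * 2 ^ m.
  rewrite Rmult_assoc; apply: Rmult_le_compat_l => //.
have E2 : eps * \big[Rplus/0]_(T : {ffun 'I_m -> bool} | ~~ (cntT T < j0)%N) (1 + u ^ cntT T) ^ n <= eps * (2 ^ m * 3).
  by apply: Rmult_le_compat_l.
have E3 : eps * 2 ^ m * 4 <= exp cK * 2 ^ m * eps.
  have : 0 <= eps * 2 ^ m by apply: Rmult_le_pos.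
  nra.
lra.
Qed.

Lemma finish m n k (d : R) (PX : 'cV['F_2]_n -> R) (p K : R) W j0 :
  0 <= p <= / 2 -> is_distr PX -> min_entropy_ge PX (INR k) ->
  Bnd m n (1 - 2 * p) (/ 2 ^ k) W j0 <= 1 + d + K * 2 ^ m * / 2 ^ k ->
  stat_dist (law_M_MX (bern_mx_law m n p) PX) (law_M_U m n (bern_mx_law m n p))
  <= / 2 * sqrt (d + K * pow 2 m / pow 2 k).
Proof.
move=> Hp HX Hm HB.
apply: Rle_trans (comb m W j0 Hp HX Hm) _.
apply: Rmult_le_compat_l; first lra.
apply: sqrt_le_1_alt; rewrite /Rdiv; lra.
Qed.

Lemma lam_ge m n : (1 <= m)%N -> (m <= n)%N ->
  cK <= ln (exp cK * INR n / INR m).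
Proof.
move=> Hm Hmn.
have HM : 1 <= INR m by apply: (le_INR 1); apply/leP.
have HMN : INR m <= INR n by apply: le_INR; apply/leP.
rewrite /Rdiv Rmult_assoc ln_mult; [|exact: exp_pos|].
- rewrite ln_exp; have : 0 <= ln (INR n * / INR m).
    rewrite -ln_1; apply: ln_le; first lra.
    apply: (Rmult_le_reg_r (INR m)); first lra.
    rewrite Rmult_assoc Rinv_l; lra.
  lra.
- apply: Rmult_lt_0_compat; [lra | apply: Rinv_0_lt_compat; lra].
Qed.

Theorem theorem1 :
  exists K : R, (0 < K) /\
  forall (n k m : nat) (delta : R),
    (1 <= m)%N -> (m <= k)%N -> (k <= n)%N ->
    (0 < delta) -> (delta < 1) ->
    forall PX : 'cV['F_2]_n -> R,
      is_distr PX -> min_entropy_ge PX (INR k) ->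
      (stat_dist (law_M_MX (bern_mx_law m n (bias K n m delta)) PX)
                 (law_M_U m n (bern_mx_law m n (bias K n m delta)))
       <= / 2 * sqrt (delta + K * pow 2 m / pow 2 k)).
Proof.
exists (exp cK); split; first exact: exp_pos.
move=> n k m d Hm Hmk Hkn Hd0 Hd1 PX HX Hent.
have Hmn : (m <= n)%N by apply: leq_trans Hkn.
have HM : 1 <= INR m by apply: (le_INR 1); apply/leP.
have HK4 : 4 <= exp cK by have := exp_ineq1_le cK; rewrite /cK; lra.
have Heps : 0 <= / 2 ^ k by apply: Rlt_le; apply: Rinv_0_lt_compat; apply: pow_lt; lra.
have H2m : 0 <= 2 ^ m by apply: pow_le; lra.
set A := / INR m * log2 (INR m / d) * ln (exp cK * INR n / INR m).
have Hlam := lam_ge Hm Hmn.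
have Hx := ln2_gt. have Hx1 := ln2_lt1.
have HMd : 1 < INR m / d.
  apply: (Rmult_lt_reg_r d) => //; rewrite /Rdiv Rmult_assoc Rinv_l; lra.
have Hlog : 0 < log2 (INR m / d).
  rewrite /log2; apply: Rdiv_lt_0_compat; last lra.
  rewrite -ln_1; apply: ln_increasing; lra.
have HA0 : 0 < A.
  rewrite /A; apply: Rmult_lt_0_compat.
    apply: Rmult_lt_0_compat => //; apply: Rinv_0_lt_compat; lra.
  apply: Rlt_le_trans Hlam; rewrite /cK; lra.
rewrite /bias -/A.
case: (Rlt_or_le A (/ 2)) => HA.
- rewrite Rmin_left; last lra.
  have Hp : 0 <= A <= / 2 by lra.
  case: (ltnP 1 m) => Hm2.
  + have [W [j0 HB]] := case_b Hm2 Hmn (conj Hd0 Hd1) Heps HA.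
    apply: (@finish m n k d PX A (exp cK) W j0 Hp HX Hent).
    rewrite -/A in HB; lra.
  + have Em : m = 1%N by apply/eqP; rewrite eqn_leq Hm2 Hm.
    apply: (@finish m n k d PX A (exp cK) 1%N 2%N Hp HX Hent).
    have Hu : 0 <= 1 - 2 * A <= 1 by lra.
    have Hud : 1 - 2 * A <= d.
      have HA1 : A = log2 (1 / d) * ln (exp cK * INR n / INR m).
        rewrite /A Em /= Rinv_1 Rmult_1_l //.
      have Hl : 1 - d <= ln (1 / d).
        rewrite /Rdiv Rmult_1_l ln_Rinv //; have := ln_le_sub1 Hd0; lra.
      have Hl0 : 0 <= ln (1 / d) by lra.
      have Hlg : ln (1 / d) <= log2 (1 / d).
        rewrite /log2; apply: (Rmult_le_reg_r (ln 2)); first lra.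
        rewrite /Rdiv Rmult_assoc Rinv_l; nra.
      have : 1 - d <= A.
        rewrite HA1.
        have H0 : 0 <= log2 (1 / d) by lra.
        have H1 : 1 <= ln (exp cK * INR n / INR m) by apply: Rle_trans Hlam; rewrite /cK; lra.
        have := Rmult_le_compat_l _ _ _ H0 H1.
        lra.
      lra.
    rewrite /Bnd.
    have E1 : / 2 ^ k * NW n 1 * CT m 2 <= / 2 ^ k * 2.
      rewrite Rmult_assoc; apply: Rmult_le_compat_l => //.
      have := NW_1 n; have := CT_ge0 m 2; have := NW_ge0 n 1; have := CT_le m 2.
      rewrite Em /=; nra.
    have E2 := @sum_small m ((1 - 2 * A) ^ 1) 2%N (pow_le (1 - 2 * A) 1 (proj1 Hu)).
    rewrite (@sum_large0 m n (1 - 2 * A) 2%N); last by rewrite Em.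
    have E2' : \big[Rplus/0]_(T : {ffun 'I_m -> bool} | (cntT T < 2)%N) ((1 - 2 * A) ^ 1) ^ cntT T
       <= 1 + (1 - 2 * A).
      apply: Rle_trans E2 _; rewrite Em /=; lra.
    have H2m1 : 2 ^ m = 2 by rewrite Em /=; ring.
    rewrite H2m1.
    have E5 : / 2 ^ k * 2 <= exp cK * 2 * / 2 ^ k.
      have := Rmult_le_compat_r (/ 2 ^ k * 2) 1 (exp cK) (ltac:(lra)) (ltac:(lra)).
      lra.
    lra.
- rewrite Rmin_right; last lra.
  have Hp : 0 <= / 2 <= / 2 by lra.
  apply: (@finish m n k d PX (/ 2) (exp cK) 1%N 1%N Hp HX Hent).
  have -> : 1 - 2 * / 2 = 0 by field.
  rewrite /Bnd.
  have E1 : / 2 ^ k * NW n 1 * CT m 1 <= / 2 ^ k * 2 ^ m.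
    rewrite Rmult_assoc; apply: Rmult_le_compat_l => //.
    have := NW_1 n; have := CT_ge0 m 1; have := NW_ge0 n 1; have := CT_le m 1.
    nra.
  have E2 := @sum_small m (0 ^ 1) 1%N (pow_le 0 1 (Rle_refl 0)).
  have E3 := @sum_large m n 0 1 (conj (Rle_refl 0) Rle_0_1).
  rewrite /= Rmult_0_l Rplus_0_r pow1 in E2.
  rewrite /= Rmult_0_l Rplus_0_r pow1 Rmult_1_r in E3.
  have E4 : / 2 ^ k * \big[Rplus/0]_(T : {ffun 'I_m -> bool} | ~~ (cntT T < 1)%N) (1 + 0 ^ cntT T) ^ n
     <= / 2 ^ k * 2 ^ m by apply: Rmult_le_compat_l.
  have E5 : / 2 ^ k * 2 ^ m * 2 <= exp cK * 2 ^ m * / 2 ^ k.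
    have : 0 <= / 2 ^ k * 2 ^ m by apply: Rmult_le_pos.
    nra.
  have -> : 0 ^ 1 = 0 by ring.
  apply: Rle_trans (Rplus_le_compat _ _ _ _ (Rplus_le_compat _ _ _ _ E1 E2) E4) _.
  lra.
Qed.
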